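(* Let $\kappa=(a,b,c,d)\in[-2,2]^4$, $\rho\in\mathcal H_\kappa$, and $(x,y,z)=(\operatorname{tr}\rho(AB),\operatorname{tr}\rho(BC),\operatorname{tr}\rho(CA))$. If $\rho$ is a $\mathrm{Pin}(2)$-representation but not a $\mathrm{Spin}(2)$-representation, then one of the following holds: (1) $\kappa=(0,0,0,0)$; (2) one of the following six conditions holds: $a=b=0$ and $y=z=0$; $c=d=0$ and $y=z=0$; $a=c=0$ and $x=y=0$; $b=d=0$ and $x=y=0$; $a=d=0$ and $x=z=0$; $b=c=0$ and $x=z=0$. Conversely, if $\rho\in\mathcal H_\kappa$ satisfies (1) or (2), then $\rho$ is a $\mathrm{Pin}(2)$-representation.
   Context: $M$ is a four-holed sphere with $\pi_1(M)=\langle A,B,C,D : ABCD=I\rangle$, $A,B,C,D$ the boundary classes. For $\kappa=(a,b,c,d)\in[-2,2]^4$, $\mathcal H_\kappa$ is the set of homomorphisms $\rho:\pi_1(M)\to\mathrm{SU}(2)$ with $\operatorname{tr}\rho(A)=a$, $\operatorname{tr}\rho(B)=b$, $\operatorname{tr}\rho(C)=c$, $\operatorname{tr}\rho(D)=d$. Let $p:\mathrm{SU}(2)\to\mathrm{SO}(3)$ be the double cover; $\mathrm{Pin}(2)=p^{-1}(\mathrm{O}(2))$, which has two components $\mathrm{Spin}(2)\cup\mathrm{Spin}_-(2)$, where $\mathrm{Spin}(2)$ is the identity component, the circle $\{e^{i\theta}\}$ with $e^{i\theta}=\begin{pmatrix}\cos\theta&\sin\theta\\-\sin\theta&\cos\theta\end{pmatrix}$,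 and $\mathrm{Spin}_-(2)$ is the other component (e.g. containing $\iota=\begin{pmatrix}i&0\\0&-i\end{pmatrix}$); all elements of $\mathrm{Spin}_-(2)$ have trace $0$. For a subgroup $G\subset\mathrm{SU}(2)$, $\rho$ is called a $G$-representation if some $\mathrm{SU}(2)$-conjugate of $\rho$ has image contained in $G$. *)

(* Defs.v *)
From HB Require Import structures.
From mathcomp Require Import all_boot all_order all_algebra.
From mathcomp Require Import reals trigo.
From mathcomp.real_closed Require Import complex.
Set Implicit Arguments. Unset Strict Implicit. Unset Printing Implicit Defensive.
Import Order.TTheory GRing.Theory Num.Theory.
Local Open Scope ring_scope.
Local Open Scope complex_scope.

Section Defs.
Variable R : realType.
Notation C := (complex R).
Notation mat := ('M[C]_2).

Definition adjmx (U : mat) : mat := \matrix_(i, j) (U j i)^*.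

Definition SU2 (U : mat) : Prop := U *m adjmx U = 1%:M /\ \det U = 1.

Definition cR (r : R) : C := r%:C.

(* Spin(2) = { e^{i theta} } with e^{i theta} = [[cos, sin], [-sin, cos]] *)
Definition e_i (t : R) : mat :=
  \matrix_(i < 2, j < 2)
    (if i == j then cR (cos t) else if (i == 0) then cR (sin t) else cR (- sin t)).

Definition Spin2 (U : mat) : Prop := exists t : R, U = e_i t.

Definition iota : mat :=
  \matrix_(i < 2, j < 2) (if i == j then (if i == 0 then 'i else - 'i) else 0).

(* Spin_-(2) = the non-identity component of Pin(2) = iota * Spin(2) *)
Definition Spin2_minus (U : mat) : Prop := exists t : R, U = iota *m e_i t.

Definition Pin2 (U : mat) : Prop := Spin2 U \/ Spin2_minus U.

(* A homomorphism pi_1(M) -> SU(2) is given by the images (rA,rB,rC,rD) of the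
   generators, all in SU(2), with rA rB rC rD = I. *)
Definition hom4 (rA rB rC rD : mat) : Prop :=
  [/\ SU2 rA, SU2 rB, SU2 rC, SU2 rD & rA *m rB *m rC *m rD = 1%:M].

(* rho is a G-representation: some SU(2)-conjugate of rho has image in G.
   Since G is a subgroup, it suffices that the generators land in G. *)
Definition G_rep (G : mat -> Prop) (rA rB rC rD : mat) : Prop :=
  exists g : mat, SU2 g /\
    [/\ G (invmx g *m rA *m g), G (invmx g *m rB *m g),
        G (invmx g *m rC *m g) & G (invmx g *m rD *m g)].

End Defs.

(* Main.v *)
Require Import Defs.
From HB Require Import structures.
From mathcomp Require Import all_boot all_order all_algebra.
From mathcomp Require Import reals trigo.
From mathcomp.real_closed Require Import complex.
From mathcomp Require Import ring lra.
Import Order.TTheory GRing.Theory Num.Theory.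
Set Implicit Arguments. Unset Strict Implicit. Unset Printing Implicit Defensive.
Local Open Scope ring_scope.
Local Open Scope complex_scope.

Section S.
Variable R : realType.
Notation C := (complex R).
Notation mat := ('M[C]_2).

Definition Qm (p q r s : R) : mat :=
  \matrix_(i < 2, j < 2)
   (if i == 0 then (if j == 0 then p +i* q else r +i* s)
    else (if j == 0 then (-r) +i* s else p +i* (-q))).

Lemma Qm_mul p1 q1 r1 s1 p2 q2 r2 s2 :
  Qm p1 q1 r1 s1 *m Qm p2 q2 r2 s2 =
  Qm (p1 * p2 - q1 * q2 - r1 * r2 - s1 * s2)%R
     (p1 * q2 + q1 * p2 + r1 * s2 - s1 * r2)%R
     (p1 * r2 - q1 * s2 + r1 * p2 + s1 * q2)%R
     (p1 * s2 + q1 * r2 - r1 * q2 + s1 * p2)%R.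
Proof.
apply/matrixP => i j; rewrite !mxE !big_ord_recl !big_ord0 !mxE /=.
case: i => [[|[|//]] Hi]; case: j => [[|[|//]] Hj] /=;
  apply/eqP; rewrite eq_complex /=; apply/andP; split; apply/eqP; ring.
Qed.

Lemma det2 (M : mat) : \det M = M 0 0 * M 1 1 - M 0 1 * M 1 0.
Proof.
rewrite (expand_det_row _ 0) /cofactor !big_ord_recl big_ord0 !det_mx11 !mxE.
rewrite /= expr0 expr1 addr0 mul1r mulN1r mulrN.
congr (_ * M _ _ - _ * M _ _); try exact: val_inj.
by congr (M _ _); apply: val_inj.
Qed.

Lemma Qm_inj p q r s p' q' r' s' : Qm p q r s = Qm p' q' r' s' ->
  [/\ p = p', q = q', r = r' & s = s'].
Proof.
move=> E.
have E1 := congr1 (fun M : mat => M 0 0) E.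
have E2 := congr1 (fun M : mat => M 0 1) E.
move: E1 E2; rewrite !mxE /= => -[-> ->] [-> ->]; by [].
Qed.

Lemma Qm1 : Qm 1 0 0 0 = 1%:M.
Proof.
apply/matrixP => i j; rewrite !mxE.
case: i => [[|[|//]] Hi]; case: j => [[|[|//]] Hj] /=; apply/eqP; rewrite eq_complex /= ?oppr0 ?eqxx //.
Qed.

Lemma tr_Qm p q r s : \tr (Qm p q r s) = (p + p)%:C.
Proof.
rewrite /mxtrace !big_ord_recl big_ord0 !mxE /=.
apply/eqP; rewrite eq_complex /=; apply/andP; split; apply/eqP; ring.
Qed.

Lemma det_Qm p q r s : \det (Qm p q r s) = (p ^+ 2 + q ^+ 2 + r ^+ 2 + s ^+ 2)%:C.
Proof.
rewrite det2 !mxE /=.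
apply/eqP; rewrite eq_complex /=; apply/andP; split; apply/eqP; ring.
Qed.

Lemma adj_Qm p q r s : adjmx (Qm p q r s) = Qm p (- q) (- r) (- s).
Proof.
apply/matrixP => i j; rewrite !mxE.
case: i => [[|[|//]] Hi]; case: j => [[|[|//]] Hj] /=;
  apply/eqP; rewrite eq_complex /=; apply/andP; split; apply/eqP; ring.
Qed.


Lemma mul2E (A B : mat) i j : (A *m B) i j = A i 0 * B 0 j + A i 1 * B 1 j.
Proof.
rewrite mxE !big_ord_recl big_ord0 addr0.
by congr (_ + A i _ * B _ j); apply: val_inj.
Qed.

Lemma mat2P (A B : mat) : A 0 0 = B 0 0 -> A 0 1 = B 0 1 ->
  A 1 0 = B 1 0 -> A 1 1 = B 1 1 -> A = B.
Proof.
move=> h00 h01 h10 h11; apply/matrixP => i j.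
have [->|->] : i = 0 \/ i = 1 by case: i => [[|[|//]] Hi]; [left|right]; apply: val_inj.
all: have [->|->] : j = 0 \/ j = 1 by case: j => [[|[|//]] Hj]; [left|right]; apply: val_inj.
all: done.
Qed.

Lemma SU2_Qm p q r s : p ^+ 2 + q ^+ 2 + r ^+ 2 + s ^+ 2 = 1 -> SU2 (Qm p q r s).
Proof.
move=> N; split; last by rewrite det_Qm N.
rewrite adj_Qm Qm_mul -Qm1; congr Qm; rewrite -?N; ring.
Qed.

Lemma Qm_invl p q r s : p ^+ 2 + q ^+ 2 + r ^+ 2 + s ^+ 2 = 1 ->
  Qm p (-q) (-r) (-s) *m Qm p q r s = 1%:M.
Proof. move=> N; rewrite Qm_mul -Qm1; congr Qm; rewrite -?N; ring. Qed.

Lemma Qm_invr p q r s : p ^+ 2 + q ^+ 2 + r ^+ 2 + s ^+ 2 = 1 ->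
  Qm p q r s *m Qm p (-q) (-r) (-s) = 1%:M.
Proof. move=> N; rewrite Qm_mul -Qm1; congr Qm; rewrite -?N; ring. Qed.

Lemma SU2_form M : SU2 M -> exists p q r s,
  M = Qm p q r s /\ p ^+ 2 + q ^+ 2 + r ^+ 2 + s ^+ 2 = 1.
Proof.
move=> [H Hd]; have H2 := mulmx1C H.
have e00 := congr1 (fun N : mat => N 0 0) H2.
have e01 := congr1 (fun N : mat => N 0 1) H2.
have e10 := congr1 (fun N : mat => N 1 0) H2.
have e11 := congr1 (fun N : mat => N 1 1) H2.
rewrite !mul2E !mxE /= in e00 e01 e10 e11.
rewrite det2 in Hd.
move: e00 e01 e10 e11 Hd.
set al := M 0 0; set be := M 0 1; set ga := M 1 0; set de := M 1 1.
move=> e00 e01 e10 e11 Hd.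
rewrite ?mulr1n ?mulr0n in e00 e01 e10 e11.
have Ede : de = al^*%C.
  have -> : al^*%C = al^*%C * (al * de - be * ga) by rewrite Hd mulr1.
  have -> : al^*%C * (al * de - be * ga) = (al^*%C * al) * de - (al^*%C * be) * ga by ring.
  have -> : al^*%C * al = 1 - ga^*%C * ga by rewrite -e00; ring.
  have -> : al^*%C * be = - (ga^*%C * de) by rewrite -[RHS]add0r -e01; ring.
  ring.
have Ega : ga = - be^*%C.
  have -> : - be^*%C = - be^*%C * (al * de - be * ga) by rewrite Hd mulr1.
  have -> : - be^*%C * (al * de - be * ga) = - (be^*%C * al) * de + (be^*%C * be) * ga by ring.
  have -> : be^*%C * be = 1 - de^*%C * de by rewrite -e11; ring.
  have -> : be^*%C * al = - (de^*%C * ga) by rewrite -[RHS]add0r -e10; ring.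
  ring.
have EM : M = Qm (complex.Re al) (complex.Im al) (complex.Re be) (complex.Im be).
  apply: mat2P; rewrite !mxE /= -/al -/be -/ga -/de ?Ede ?Ega.
  - by case: (al).
  - by case: (be).
  - by case: (be) => x y /=; apply/eqP; rewrite eq_complex /= opprK !eqxx.
  - by case: (al).
exists (complex.Re al), (complex.Im al), (complex.Re be), (complex.Im be); split => //.
move: Hd; rewrite Ede Ega; case: (al) => x y; case: (be) => u v.
move/(congr1 (@complex.Re R)) => /= <-; ring.
Qed.

Lemma e_iQ t : e_i t = Qm (cos t) 0 (sin t) 0.
Proof.
apply: mat2P; rewrite !mxE /= /cR; apply/eqP; rewrite eq_complex /= ?oppr0 !eqxx //.
Qed.

Lemma iota_eQ t : @Defs.iota R *m e_i t = Qm 0 (cos t) 0 (sin t).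
Proof.
apply: mat2P; rewrite !mul2E !mxE /= /cR; apply/eqP; rewrite eq_complex /=;
  apply/andP; split; apply/eqP; ring.
Qed.

Lemma angle p r : p ^+ 2 + r ^+ 2 = 1 -> exists t : R, cos t = p /\ sin t = r.
Proof.
move=> N.
have hp : -1 <= p <= 1 by apply/andP; split; nra.
have hc : cos (acos p) = p by apply: acosK; rewrite in_itv /=.
have hs : sin (acos p) = `|r|.
  rewrite sin_acos // (_ : 1 - p ^+ 2 = r ^+ 2); last by rewrite -N; ring.
  by rewrite sqrtr_sqr.
have [r0|r0] := leP 0 r.
  by exists (acos p); rewrite hc hs ger0_norm.
by exists (- acos p); rewrite cosN sinN hc hs ltr0_norm // opprK.
Qed.

Lemma Spin2E M : Spin2 M -> exists p r, M = Qm p 0 r 0 /\ p ^+ 2 + r ^+ 2 = 1.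
Proof. by case=> t ->; exists (cos t), (sin t); rewrite e_iQ cos2Dsin2. Qed.

Lemma Spin2mE M : Spin2_minus M -> exists q s, M = Qm 0 q 0 s /\ q ^+ 2 + s ^+ 2 = 1.
Proof. by case=> t ->; exists (cos t), (sin t); rewrite iota_eQ cos2Dsin2. Qed.

Lemma Spin2I p r : p ^+ 2 + r ^+ 2 = 1 -> Spin2 (Qm p 0 r 0).
Proof. by case/angle=> t [<- <-]; exists t; rewrite e_iQ. Qed.

Lemma Spin2mI q s : q ^+ 2 + s ^+ 2 = 1 -> Spin2_minus (Qm 0 q 0 s).
Proof. by case/angle=> t [<- <-]; exists t; rewrite iota_eQ. Qed.


Definition EO (b : bool) (M : mat) : Prop :=
  if b then exists q s, M = Qm 0 q 0 s else exists p r, M = Qm p 0 r 0.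

Lemma EO_mul b c M N : EO b M -> EO c N -> EO (b (+) c) (M *m N).
Proof.
case: b; case: c => /= -[x [y ->]] [u [v ->]]; rewrite Qm_mul.
- by exists (- (x * u) - y * v), (y * u - x * v); congr Qm; ring.
- by exists (x * u - y * v), (x * v + y * u); congr Qm; ring.
- by exists (x * u + y * v), (x * v - y * u); congr Qm; ring.
- by exists (x * u - y * v), (x * v + y * u); congr Qm; ring.
Qed.

Lemma EO1 b : EO b 1%:M -> b = false.
Proof.
case: b => //= -[q [s]]; rewrite -Qm1 => /Qm_inj [/eqP]; by rewrite oner_eq0.
Qed.

Lemma EO_tr M : EO true M -> \tr M = 0.
Proof. by case=> q [s ->]; rewrite tr_Qm addr0. Qed.

Lemma Pin2_EO M : Pin2 M -> exists b, EO b M /\ (b = false -> Spin2 M).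
Proof.
case=> [h|h].
  by exists false; split => //; case: (Spin2E h) => p [r [-> _]]; exists p, r.
by exists true; split => //; case: (Spin2mE h) => q [s [-> _]]; exists q, s.
Qed.

Section Conj.
Variable g : mat.
Hypothesis hg : SU2 g.
Definition cj (X : mat) := invmx g *m X *m g.

Lemma g_unit : g \in unitmx.
Proof. by rewrite unitmxE; case: hg => _ ->; exact: unitr1. Qed.

Lemma cj_mul X Y : cj X *m cj Y = cj (X *m Y).
Proof.
rewrite /cj !mulmxA -[invmx g *m X *m g *m invmx g](mulmxA) mulmxV ?g_unit //.
by rewrite mulmx1.
Qed.

Lemma cj_tr X : \tr (cj X) = \tr X.
Proof.
by rewrite /cj mxtrace_mulC mulmxA mulmxV ?g_unit // mul1mx.
Qed.

Lemma cj1 : cj 1%:M = 1%:M.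
Proof. by rewrite /cj mulmx1 mulVmx ?g_unit. Qed.
End Conj.


Lemma re0 (a : R) : a%:C = 0 -> a = 0.
Proof. by move/(congr1 (@complex.Re R)). Qed.

Lemma trEO g b X : SU2 g -> EO b (cj g X) -> b -> \tr X = 0.
Proof. by move=> hg; case: b => // h _; rewrite -(cj_tr hg) EO_tr. Qed.

Lemma forward (a b c d : R) (rA rB rC rD : mat) :
  hom4 rA rB rC rD ->
  \tr rA = a%:C -> \tr rB = b%:C -> \tr rC = c%:C -> \tr rD = d%:C ->
  G_rep (@Pin2 R) rA rB rC rD -> ~ G_rep (@Spin2 R) rA rB rC rD ->
  [/\ a = 0, b = 0, c = 0 & d = 0] \/
  ([/\ a = 0, b = 0, \tr (rB *m rC) = 0 & \tr (rC *m rA) = 0]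
    \/ [/\ c = 0, d = 0, \tr (rB *m rC) = 0 & \tr (rC *m rA) = 0]
    \/ [/\ a = 0, c = 0, \tr (rA *m rB) = 0 & \tr (rB *m rC) = 0]
    \/ [/\ b = 0, d = 0, \tr (rA *m rB) = 0 & \tr (rB *m rC) = 0]
    \/ [/\ a = 0, d = 0, \tr (rA *m rB) = 0 & \tr (rC *m rA) = 0]
    \/ [/\ b = 0, c = 0, \tr (rA *m rB) = 0 & \tr (rC *m rA) = 0]).
Proof.
move=> [sA sB sC sD hprod] tA tB tC tD [g [hg [pA pB pC pD]]] nS.
have [bA [eA fA]] := Pin2_EO pA.
have [bB [eB fB]] := Pin2_EO pB.
have [bC [eC fC]] := Pin2_EO pC.
have [bD [eD fD]] := Pin2_EO pD.
have eA' : EO bA (cj g rA) := eA.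
have eB' : EO bB (cj g rB) := eB.
have eC' : EO bC (cj g rC) := eC.
have eD' : EO bD (cj g rD) := eD.
have hP := EO_mul (EO_mul (EO_mul eA' eB') eC') eD'.
rewrite !(cj_mul hg) hprod (cj1 hg) in hP; move/EO1: hP => hP.
have ha : bA -> a = 0 by move=> h; apply: re0; rewrite -tA (trEO hg eA' h).
have hb : bB -> b = 0 by move=> h; apply: re0; rewrite -tB (trEO hg eB' h).
have hc : bC -> c = 0 by move=> h; apply: re0; rewrite -tC (trEO hg eC' h).
have hd : bD -> d = 0 by move=> h; apply: re0; rewrite -tD (trEO hg eD' h).
have hx : bA (+) bB -> \tr (rA *m rB) = 0.
  by move=> h; have := EO_mul eA' eB'; rewrite (cj_mul hg) => /trEO; apply.
have hy : bB (+) bC -> \tr (rB *m rC) = 0.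
  by move=> h; have := EO_mul eB' eC'; rewrite (cj_mul hg) => /trEO; apply.
have hz : bC (+) bA -> \tr (rC *m rA) = 0.
  by move=> h; have := EO_mul eC' eA'; rewrite (cj_mul hg) => /trEO; apply.
clear eA eB eC eD eA' eB' eC' eD'.
destruct bA, bB, bC, bD; simpl in *;
  repeat match goal with H : is_true true -> _ |- _ => specialize (H isT) end;
  try discriminate.
all: first [ by left; split
           | right; repeat (first [left; split; assumption | right]); split; assumption
           | exfalso; apply: nS; exists g; split => //; split; auto ].
Qed.


Definition CA (X W : mat) := X *m W = W *m X \/ X *m W = - (W *m X).

Lemma CA_mul X Y W : CA X W -> CA Y W -> CA (X *m Y) W.
Proof.
rewrite /CA -!mulmxA => hX hY.
case: hY => ->; case: hX => h; rewrite ?mulmxN !mulmxA h ?mulNmx ?opprK; auto.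
Qed.

Lemma CA_inv P D W : P *m D = 1%:M -> CA P W -> CA D W.
Proof.
move=> hPD; have hDP := mulmx1C hPD.
have E : D *m W = D *m W *m (P *m D) by rewrite hPD mulmx1.
rewrite /CA E -!mulmxA [W *m (P *m D)]mulmxA => -[h|h].
- by left; rewrite -h !mulmxA hDP mul1mx.
- have h' : W *m P = - (P *m W) by rewrite h opprK.
  by right; rewrite h' mulNmx mulmxN !mulmxA hDP mul1mx.
Qed.

Lemma CA_D (A B C D W : mat) : A *m B *m C *m D = 1%:M ->
  CA A W -> CA B W -> CA C W -> CA D W.
Proof.
move=> h hA hB hC; apply: (CA_inv h); do 2 apply: CA_mul => //.
Qed.

Lemma rot4 (A B C D : mat) : A *m B *m C *m D = 1%:M -> B *m C *m D *m A = 1%:M.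
Proof. by move=> h; apply: mulmx1C; rewrite !mulmxA. Qed.

Lemma CA_C (A B C D W : mat) : A *m B *m C *m D = 1%:M ->
  CA A W -> CA B W -> CA D W -> CA C W.
Proof. move=> h hA hB hD; apply: (CA_D (rot4 (rot4 (rot4 h)))) => //. Qed.

Lemma CA_B (A B C D W : mat) : A *m B *m C *m D = 1%:M ->
  CA A W -> CA C W -> CA D W -> CA B W.
Proof. move=> h hA hC hD; apply: (CA_D (rot4 (rot4 h))) => //. Qed.

Lemma CA_A (A B C D W : mat) : A *m B *m C *m D = 1%:M ->
  CA B W -> CA C W -> CA D W -> CA A W.
Proof. move=> h hB hC hD; apply: (CA_D (rot4 h)) => //. Qed.

Lemma lincomb (x y e c : R) : e = 0 -> x - y = c * e -> x = y.
Proof. by move=> -> ; rewrite mulr0 => /eqP; rewrite subr_eq0 => /eqP. Qed.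

Lemma CA_c x0 x1 x2 x3 w1 w2 w3 :
  x2 * w3 - x3 * w2 = 0 -> x3 * w1 - x1 * w3 = 0 -> x1 * w2 - x2 * w1 = 0 ->
  CA (Qm x0 x1 x2 x3) (Qm 0 w1 w2 w3).
Proof.
move=> h1 h2 h3; left; rewrite !Qm_mul; congr Qm; try ring.
- by apply: (lincomb (c := 2) h1); ring.
- by apply: (lincomb (c := 2) h2); ring.
- by apply: (lincomb (c := 2) h3); ring.
Qed.

Lemma Qm_opp p q r s : - Qm p q r s = Qm (- p) (- q) (- r) (- s).
Proof.
apply: mat2P; rewrite !mxE /=; apply/eqP; rewrite eq_complex /=;
  apply/andP; split; apply/eqP; ring.
Qed.

Lemma CA_a x1 x2 x3 w1 w2 w3 :
  x1 * w1 + x2 * w2 + x3 * w3 = 0 ->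
  CA (Qm 0 x1 x2 x3) (Qm 0 w1 w2 w3).
Proof.
move=> h; right; rewrite !Qm_mul Qm_opp; congr Qm; try ring.
by apply: (lincomb (c := -2) h); ring.
Qed.


Lemma SU2_mul (X Y : mat) : SU2 X -> SU2 Y -> SU2 (X *m Y).
Proof.
move=> /SU2_form [x0 [x1 [x2 [x3 [-> Nx]]]]] /SU2_form [y0 [y1 [y2 [y3 [-> Ny]]]]].
rewrite Qm_mul; apply: SU2_Qm.
rewrite -[1]mulr1 -{1}Nx -Ny; ring.
Qed.

Lemma Qm_inv_uniq p q r s (Y : mat) : p ^+ 2 + q ^+ 2 + r ^+ 2 + s ^+ 2 = 1 ->
  Qm p q r s *m Y = 1%:M -> Y = Qm p (-q) (-r) (-s).
Proof.
move=> N h.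
by rewrite -[Y]mul1mx -(Qm_invl N) -mulmxA h mulmx1.
Qed.

Lemma trace_inv (X Y : mat) : SU2 X -> X *m Y = 1%:M -> \tr Y = \tr X.
Proof.
case/SU2_form => [p [q [r [s [-> N]]]]] h.
by rewrite (Qm_inv_uniq N h) !tr_Qm.
Qed.

Lemma tr_Qm_mul x0 x1 x2 x3 y0 y1 y2 y3 :
  \tr (Qm x0 x1 x2 x3 *m Qm y0 y1 y2 y3) =
  ((x0 * y0 - x1 * y1 - x2 * y2 - x3 * y3) *+ 2)%:C.
Proof. by rewrite Qm_mul tr_Qm mulr2n. Qed.

Definition J : mat := Qm 0 0 1 0.

Lemma CA_J_Pin2 (X : mat) : SU2 X -> CA X J -> Pin2 X.
Proof.
case/SU2_form => [p [q [r [s [-> N]]]]].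
rewrite /CA /J !Qm_mul => -[/Qm_inj [_ h1 _ h2] | ].
  have q0 : q = 0 by lra.
  have s0 : s = 0 by lra.
  by left; rewrite q0 s0; apply: Spin2I; rewrite -N q0 s0; ring.
rewrite Qm_opp => /Qm_inj [h1 _ h2 _].
have p0 : p = 0 by lra.
have r0 : r = 0 by lra.
by right; rewrite p0 r0; apply: Spin2mI; rewrite -N p0 r0; ring.
Qed.

Lemma SU2_cj (g X : mat) : SU2 g -> SU2 X -> SU2 (cj g X).
Proof.
move=> hg hX; rewrite /cj; apply: SU2_mul => //; apply: SU2_mul => //.
case/SU2_form: hg => [p [q [r [s [-> N]]]]].
have -> : invmx (Qm p q r s) = Qm p (-q) (-r) (-s).
  apply: Qm_inv_uniq => //.
  apply: mulmxV; rewrite unitmxE det_Qm N; exact: unitr1.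
by apply: SU2_Qm; rewrite -N; ring.
Qed.


Lemma CA_cj g U X : g \in unitmx -> U *m g = g *m J -> CA X U -> CA (cj g X) J.
Proof.
move=> hgu hU hX.
have hJ : invmx g *m U = J *m invmx g.
  by rewrite -[invmx g *m U]mulmx1 -(mulmxV hgu) mulmxA -(mulmxA (invmx g) U g) hU
     !mulmxA mulVmx // mul1mx.
have e1 : cj g X *m J = invmx g *m (X *m U) *m g by rewrite /cj -!mulmxA -hU.
have e2 : J *m cj g X = invmx g *m (U *m X) *m g by rewrite /cj !mulmxA -hJ.
by case: hX => h; [left|right]; rewrite e1 e2 h ?mulmxN ?mulNmx.
Qed.

Lemma conj_to_J u1 u2 u3 : u1 ^+ 2 + u2 ^+ 2 + u3 ^+ 2 = 1 ->
  exists g, SU2 g /\ forall X, CA X (Qm 0 u1 u2 u3) -> CA (cj g X) J.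
Proof.
move=> N.
have [e|ne] := eqVneq u2 (-1).
  have u10 : u1 = 0 by nra.
  have u30 : u3 = 0 by nra.
  exists 1%:M; split; first by rewrite -Qm1; apply: SU2_Qm; ring.
  have mJ : Qm 0 0 (-1) 0 = - J by rewrite /J Qm_opp !oppr0.
  move=> X; rewrite u10 u30 e mJ /CA /cj invmx1 mulmx1 mul1mx mulmxN mulNmx => -[h|h].
    by left; apply: oppr_inj.
  by right; apply: oppr_inj.
have hpos : 0 < 2 + 2 * u2.
  have : -1 <= u2 by nra.
  rewrite le_eqVlt => /orP [/eqP h|h]; first by rewrite h eqxx in ne.
  lra.
set n := Num.sqrt (2 + 2 * u2).
have n0 : 0 < n by rewrite sqrtr_gt0.
have n2 : n ^+ 2 = 2 + 2 * u2 by rewrite sqr_sqrtr // ltW.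
set k := n^-1.
have kn : k * n = 1 by rewrite mulVf // gt_eqF.
have Ng : ((1 + u2) * k) ^+ 2 + (u3 * k) ^+ 2 + 0 ^+ 2 + (- u1 * k) ^+ 2 = 1.
  have -> : ((1 + u2) * k) ^+ 2 + (u3 * k) ^+ 2 + 0 ^+ 2 + (- u1 * k) ^+ 2 =
     k ^+ 2 * ((1 + u2) ^+ 2 + u3 ^+ 2 + u1 ^+ 2) by ring.
  have -> : (1 + u2) ^+ 2 + u3 ^+ 2 + u1 ^+ 2 = n ^+ 2.
    rewrite n2; apply: (lincomb (e := u1 ^+ 2 + u2 ^+ 2 + u3 ^+ 2 - 1) (c := 1)); first by rewrite N subrr.
    ring.
  by rewrite -exprMn kn expr1n.
exists (Qm ((1 + u2) * k) (u3 * k) 0 (- u1 * k)); split; first exact: SU2_Qm.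
move=> X; apply: CA_cj.
  by rewrite unitmxE det_Qm Ng; exact: unitr1.
rewrite /J !Qm_mul; congr Qm; try ring.
apply: (lincomb (e := u1 ^+ 2 + u2 ^+ 2 + u3 ^+ 2 - 1) (c := k)); first by rewrite N subrr.
ring.
Qed.


Lemma KeyU (rA rB rC rD : mat) u1 u2 u3 :
  SU2 rA -> SU2 rB -> SU2 rC -> SU2 rD -> u1 ^+ 2 + u2 ^+ 2 + u3 ^+ 2 = 1 ->
  CA rA (Qm 0 u1 u2 u3) -> CA rB (Qm 0 u1 u2 u3) ->
  CA rC (Qm 0 u1 u2 u3) -> CA rD (Qm 0 u1 u2 u3) ->
  G_rep (@Pin2 R) rA rB rC rD.
Proof.
move=> sA sB sC sD N hA hB hC hD.
have [g [hg Hg]] := conj_to_J N.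
exists g; split => //; split; apply: CA_J_Pin2; try exact: SU2_cj; exact: Hg.
Qed.

Lemma Qm_scale c p q r s : Qm (c * p) (c * q) (c * r) (c * s) = (c%:C)%:M *m Qm p q r s.
Proof.
apply: mat2P; rewrite !mul2E !mxE /=; apply/eqP; rewrite eq_complex /=;
  apply/andP; split; apply/eqP; ring.
Qed.

Lemma CA_scale (X U : mat) (c : C) : c != 0 -> CA X (c%:M *m U) -> CA X U.
Proof.
move=> c0.
have K : forall M : mat, (c^-1)%:M *m (c%:M *m M) = M.
  by move=> M; rewrite mulmxA -scalar_mxM mulVf // mul1mx.
have S : X *m (c%:M *m U) = c%:M *m (X *m U) by rewrite !mulmxA scalar_mxC.
rewrite /CA S -mulmxA => -[h|h].
  by left; rewrite -[LHS]K h K.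
by right; rewrite -[LHS]K h mulmxN K.
Qed.

Lemma KeyW (rA rB rC rD : mat) w1 w2 w3 :
  SU2 rA -> SU2 rB -> SU2 rC -> SU2 rD -> 0 < w1 ^+ 2 + w2 ^+ 2 + w3 ^+ 2 ->
  CA rA (Qm 0 w1 w2 w3) -> CA rB (Qm 0 w1 w2 w3) ->
  CA rC (Qm 0 w1 w2 w3) -> CA rD (Qm 0 w1 w2 w3) ->
  G_rep (@Pin2 R) rA rB rC rD.
Proof.
move=> sA sB sC sD Np.
set m := Num.sqrt (w1 ^+ 2 + w2 ^+ 2 + w3 ^+ 2).
have m0 : 0 < m by rewrite sqrtr_gt0.
have m2 : m ^+ 2 = w1 ^+ 2 + w2 ^+ 2 + w3 ^+ 2 by rewrite sqr_sqrtr // ltW.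
set k := m^-1.
have km : k * m = 1 by rewrite mulVf // gt_eqF.
have E : Qm 0 w1 w2 w3 = (m%:C)%:M *m Qm 0 (k * w1) (k * w2) (k * w3).
  rewrite -Qm_scale mulr0 !mulrA (mulrC m k) km !mul1r //.
have mC : m%:C != 0 by apply/negP => /eqP /re0 h; move: m0; rewrite h ltxx.
rewrite E => hA hB hC hD.
apply: (@KeyU _ _ _ _ (k * w1) (k * w2) (k * w3)) => //; try exact: (CA_scale mC).
have -> : (k * w1) ^+ 2 + (k * w2) ^+ 2 + (k * w3) ^+ 2 = k ^+ 2 * m ^+ 2 by rewrite m2; ring.
by rewrite -exprMn km expr1n.
Qed.


Lemma sq0 (x y z : R) : ~ 0 < x ^+ 2 + y ^+ 2 + z ^+ 2 -> [/\ x = 0, y = 0 & z = 0].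
Proof. move/negP; rewrite -leNgt => h; split; nra. Qed.

Lemma perp1 (v1 v2 v3 : R) : exists w1 w2 w3 : R,
  0 < w1 ^+ 2 + w2 ^+ 2 + w3 ^+ 2 /\ w1 * v1 + w2 * v2 + w3 * v3 = 0.
Proof.
have [h|h] := ltP 0 (v1 ^+ 2 + v2 ^+ 2).
  by exists (- v2), v1, 0; split; [nra | ring].
have v10 : v1 = 0 by nra.
have v20 : v2 = 0 by nra.
by exists 1, 0, 0; split; [lra | rewrite v10; ring].
Qed.

Lemma perp2 (v1 v2 v3 x1 x2 x3 : R) : exists w1 w2 w3 : R,
  [/\ 0 < w1 ^+ 2 + w2 ^+ 2 + w3 ^+ 2, w1 * v1 + w2 * v2 + w3 * v3 = 0
    & w1 * x1 + w2 * x2 + w3 * x3 = 0].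
Proof.
have [h|h] := boolP (0 < (v2 * x3 - v3 * x2) ^+ 2 + (v3 * x1 - v1 * x3) ^+ 2 + (v1 * x2 - v2 * x1) ^+ 2).
  by exists (v2 * x3 - v3 * x2), (v3 * x1 - v1 * x3), (v1 * x2 - v2 * x1); split => //; ring.
have [n1 n2 n3] := sq0 (negP h).
have [hv|hv] := boolP (0 < v1 ^+ 2 + v2 ^+ 2 + v3 ^+ 2).
  have [w1 [w2 [w3 [wp wv]]]] := perp1 v1 v2 v3.
  exists w1, w2, w3; split => //.
  have key : (v1 ^+ 2 + v2 ^+ 2 + v3 ^+ 2) * (w1 * x1 + w2 * x2 + w3 * x3) = 0.
    have -> : (v1 ^+ 2 + v2 ^+ 2 + v3 ^+ 2) * (w1 * x1 + w2 * x2 + w3 * x3) =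
      (v1 * x1 + v2 * x2 + v3 * x3) * (w1 * v1 + w2 * v2 + w3 * v3)
      + w1 * ((v3 * x1 - v1 * x3) * v3 - (v1 * x2 - v2 * x1) * v2)
      + w2 * ((v1 * x2 - v2 * x1) * v1 - (v2 * x3 - v3 * x2) * v3)
      + w3 * ((v2 * x3 - v3 * x2) * v2 - (v3 * x1 - v1 * x3) * v1) by ring.
    by rewrite n1 n2 n3 wv; ring.
  move/eqP: key; rewrite mulf_eq0 => /orP [/eqP e|/eqP //].
  by move: hv; rewrite e ltxx.
have [v10 v20 v30] := sq0 (negP hv).
have [w1 [w2 [w3 [wp wx]]]] := perp1 x1 x2 x3.
by exists w1, w2, w3; split => //; rewrite v10 v20 v30; ring.
Qed.

Lemma coplanar (a1 a2 a3 b1 b2 b3 c1 c2 c3 : R) :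
  a1 ^+ 2 + a2 ^+ 2 + a3 ^+ 2 = 1 ->
  c1 * (a2 * b3 - a3 * b2) + c2 * (a3 * b1 - a1 * b3) + c3 * (a1 * b2 - a2 * b1) = 0 ->
  exists w1 w2 w3 : R,
  [/\ 0 < w1 ^+ 2 + w2 ^+ 2 + w3 ^+ 2, w1 * a1 + w2 * a2 + w3 * a3 = 0,
      w1 * b1 + w2 * b2 + w3 * b3 = 0 & w1 * c1 + w2 * c2 + w3 * c3 = 0].
Proof.
move=> Na T.
have [h|h] := boolP (0 < (a2 * b3 - a3 * b2) ^+ 2 + (a3 * b1 - a1 * b3) ^+ 2 + (a1 * b2 - a2 * b1) ^+ 2).
  exists (a2 * b3 - a3 * b2), (a3 * b1 - a1 * b3), (a1 * b2 - a2 * b1); split => //; try ring.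
  by rewrite -T; ring.
have [n1 n2 n3] := sq0 (negP h).
have [w1 [w2 [w3 [wp wa wc]]]] := perp2 a1 a2 a3 c1 c2 c3.
exists w1, w2, w3; split => //.
have -> : w1 * b1 + w2 * b2 + w3 * b3 =
      (a1 ^+ 2 + a2 ^+ 2 + a3 ^+ 2) * (w1 * b1 + w2 * b2 + w3 * b3) by rewrite Na mul1r.
have -> : (a1 ^+ 2 + a2 ^+ 2 + a3 ^+ 2) * (w1 * b1 + w2 * b2 + w3 * b3) =
      (a1 * b1 + a2 * b2 + a3 * b3) * (w1 * a1 + w2 * a2 + w3 * a3)
      + w1 * ((a3 * b1 - a1 * b3) * a3 - (a1 * b2 - a2 * b1) * a2)
      + w2 * ((a1 * b2 - a2 * b1) * a1 - (a2 * b3 - a3 * b2) * a3)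
      + w3 * ((a2 * b3 - a3 * b2) * a2 - (a3 * b1 - a1 * b3) * a1) by ring.
by rewrite n1 n2 n3 wa; ring.
Qed.


Lemma CA_a' (x1 x2 x3 w1 w2 w3 : R) : w1 * x1 + w2 * x2 + w3 * x3 = 0 ->
  CA (Qm 0 x1 x2 x3) (Qm 0 w1 w2 w3).
Proof. by move=> h; apply: CA_a; apply: (lincomb (c := 1) h); ring. Qed.

Lemma Zlem (x1 x2 x3 y1 y2 y3 z0 z1 z2 z3 : R) :
  x1 * z1 + x2 * z2 + x3 * z3 = 0 -> y1 * z1 + y2 * z2 + y3 * z3 = 0 ->
  exists w1 w2 w3 : R, [/\ 0 < w1 ^+ 2 + w2 ^+ 2 + w3 ^+ 2,
    CA (Qm 0 x1 x2 x3) (Qm 0 w1 w2 w3), CA (Qm 0 y1 y2 y3) (Qm 0 w1 w2 w3)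
  & CA (Qm z0 z1 z2 z3) (Qm 0 w1 w2 w3)].
Proof.
move=> hx hy.
have [h|h] := boolP (0 < z1 ^+ 2 + z2 ^+ 2 + z3 ^+ 2).
  exists z1, z2, z3; split => //; try (apply: CA_a; first [apply: (lincomb (c := 1) hx); ring | apply: (lincomb (c := 1) hy); ring]).
  by apply: CA_c; ring.
have [e1 e2 e3] := sq0 (negP h).
have [w1 [w2 [w3 [wp wx wy]]]] := perp2 x1 x2 x3 y1 y2 y3.
exists w1, w2, w3; split => //; try exact: CA_a'.
by rewrite e1 e2 e3; apply: CA_c; ring.
Qed.

Lemma trE x0 x1 x2 x3 y0 y1 y2 y3 :
  \tr (Qm x0 x1 x2 x3 *m Qm y0 y1 y2 y3) = 0 ->
  x0 * y0 - x1 * y1 - x2 * y2 - x3 * y3 = 0.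
Proof. by rewrite tr_Qm_mul => /re0; rewrite mulr2n; lra. Qed.

Lemma tr0 (a x0 x1 x2 x3 : R) : \tr (Qm x0 x1 x2 x3) = a%:C -> a = 0 -> x0 = 0.
Proof. by rewrite tr_Qm => /(congr1 (@complex.Re R)) /= h ha; rewrite ha in h; lra. Qed.


Lemma SU2_N p q r s : SU2 (Qm p q r s) -> p ^+ 2 + q ^+ 2 + r ^+ 2 + s ^+ 2 = 1.
Proof. by case=> _; rewrite det_Qm => /(congr1 (@complex.Re R)). Qed.

Lemma converse (a b c d : R) (rA rB rC rD : mat) :
  hom4 rA rB rC rD ->
  \tr rA = a%:C -> \tr rB = b%:C -> \tr rC = c%:C -> \tr rD = d%:C ->
  [/\ a = 0, b = 0, c = 0 & d = 0] \/
  ([/\ a = 0, b = 0, \tr (rB *m rC) = 0 & \tr (rC *m rA) = 0]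
    \/ [/\ c = 0, d = 0, \tr (rB *m rC) = 0 & \tr (rC *m rA) = 0]
    \/ [/\ a = 0, c = 0, \tr (rA *m rB) = 0 & \tr (rB *m rC) = 0]
    \/ [/\ b = 0, d = 0, \tr (rA *m rB) = 0 & \tr (rB *m rC) = 0]
    \/ [/\ a = 0, d = 0, \tr (rA *m rB) = 0 & \tr (rC *m rA) = 0]
    \/ [/\ b = 0, c = 0, \tr (rA *m rB) = 0 & \tr (rC *m rA) = 0]) ->
  G_rep (@Pin2 R) rA rB rC rD.
Proof.
move=> [sA sB sC sD hp] tA tB tC tD H.
have [a0 [a1 [a2 [a3 [EA NA]]]]] := SU2_form sA.
have [b0 [b1 [b2 [b3 [EB NB]]]]] := SU2_form sB.
have [c0 [c1 [c2 [c3 [EC NC]]]]] := SU2_form sC.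
have [d0 [d1 [d2 [d3 [ED ND]]]]] := SU2_form sD.
have hBCDA : (rB *m rC) *m (rD *m rA) = 1%:M by rewrite !mulmxA; exact: rot4 hp.
have hABCD : (rA *m rB) *m (rC *m rD) = 1%:M by rewrite !mulmxA.
have tDA : \tr (rD *m rA) = \tr (rB *m rC) := trace_inv (SU2_mul sB sC) hBCDA.
have tCD : \tr (rC *m rD) = \tr (rA *m rB) := trace_inv (SU2_mul sA sB) hABCD.
rewrite EA in tA; rewrite EB in tB; rewrite EC in tC; rewrite ED in tD.
case: H => [[ha hb hc hd]|[|[|[|[|[|]]]]]].
-
  have a00 := tr0 tA ha; have b00 := tr0 tB hb.
  have c00 := tr0 tC hc; have d00 := tr0 tD hd.
  have Nab := SU2_mul sA sB.
  rewrite EA EB Qm_mul in Nab; move/SU2_N: Nab => Nab.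
  rewrite EA EB Qm_mul in hABCD.
  have hinv := Qm_inv_uniq Nab hABCD.
  rewrite EC ED Qm_mul a00 b00 c00 d00 in hinv; case/Qm_inj: hinv => _ hQ hR hS.
  have T : c1 * (a2 * b3 - a3 * b2) + c2 * (a3 * b1 - a1 * b3) + c3 * (a1 * b2 - a2 * b1) = 0.
    have -> : a2 * b3 - a3 * b2 = - (c2 * d3 - c3 * d2) by lra.
    have -> : a3 * b1 - a1 * b3 = - (c3 * d1 - c1 * d3) by lra.
    have -> : a1 * b2 - a2 * b1 = - (c1 * d2 - c2 * d1) by lra.
    ring.
  have NA' : a1 ^+ 2 + a2 ^+ 2 + a3 ^+ 2 = 1 by rewrite a00 in NA; lra.
  have [w1 [w2 [w3 [wp wa wb wc]]]] := coplanar NA' T.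
  have cA : CA rA (Qm 0 w1 w2 w3) by rewrite EA a00; exact: CA_a'.
  have cB : CA rB (Qm 0 w1 w2 w3) by rewrite EB b00; exact: CA_a'.
  have cC : CA rC (Qm 0 w1 w2 w3) by rewrite EC c00; exact: CA_a'.
  have cD := CA_D hp cA cB cC.
  exact: (KeyW sA sB sC sD wp cA cB cC cD).
-
  move=> [ha hb hy hz].
  have a00 := tr0 tA ha; have b00 := tr0 tB hb.
  rewrite EB EC in hy; move/trE: hy => hy.
  rewrite EC EA in hz; move/trE: hz => hz.
  have [w1 [w2 [w3 [wp cX cY cZ]]]] := @Zlem a1 a2 a3 b1 b2 b3 c0 c1 c2 c3
     ltac:(rewrite a00 in hz; lra) ltac:(rewrite b00 in hy; lra).
  have cA : CA rA (Qm 0 w1 w2 w3) by rewrite EA a00.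
  have cB : CA rB (Qm 0 w1 w2 w3) by rewrite EB b00.
  have cC : CA rC (Qm 0 w1 w2 w3) by rewrite EC.
  exact: (KeyW sA sB sC sD wp cA cB cC (CA_D hp cA cB cC)).
-
  move=> [hc hd hy hz].
  have c00 := tr0 tC hc; have d00 := tr0 tD hd.
  rewrite -tDA ED EA in hy; move/trE: hy => hy.
  rewrite EC EA in hz; move/trE: hz => hz.
  have [w1 [w2 [w3 [wp cX cY cZ]]]] := @Zlem c1 c2 c3 d1 d2 d3 a0 a1 a2 a3
     ltac:(rewrite c00 in hz; lra) ltac:(rewrite d00 in hy; lra).
  have cC : CA rC (Qm 0 w1 w2 w3) by rewrite EC c00.
  have cD : CA rD (Qm 0 w1 w2 w3) by rewrite ED d00.
  have cA : CA rA (Qm 0 w1 w2 w3) by rewrite EA.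
  exact: (KeyW sA sB sC sD wp cA (CA_B hp cA cC cD) cC cD).
-
  move=> [ha hc hx hy].
  have a00 := tr0 tA ha; have c00 := tr0 tC hc.
  rewrite EA EB in hx; move/trE: hx => hx.
  rewrite EB EC in hy; move/trE: hy => hy.
  have [w1 [w2 [w3 [wp cX cY cZ]]]] := @Zlem a1 a2 a3 c1 c2 c3 b0 b1 b2 b3
     ltac:(rewrite a00 in hx; lra) ltac:(rewrite c00 in hy; lra).
  have cA : CA rA (Qm 0 w1 w2 w3) by rewrite EA a00.
  have cC : CA rC (Qm 0 w1 w2 w3) by rewrite EC c00.
  have cB : CA rB (Qm 0 w1 w2 w3) by rewrite EB.
  exact: (KeyW sA sB sC sD wp cA cB cC (CA_D hp cA cB cC)).
-
  move=> [hb hd hx hy].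
  have b00 := tr0 tB hb; have d00 := tr0 tD hd.
  rewrite EA EB in hx; move/trE: hx => hx.
  rewrite -tDA ED EA in hy; move/trE: hy => hy.
  have [w1 [w2 [w3 [wp cX cY cZ]]]] := @Zlem b1 b2 b3 d1 d2 d3 a0 a1 a2 a3
     ltac:(rewrite b00 in hx; lra) ltac:(rewrite d00 in hy; lra).
  have cB : CA rB (Qm 0 w1 w2 w3) by rewrite EB b00.
  have cD : CA rD (Qm 0 w1 w2 w3) by rewrite ED d00.
  have cA : CA rA (Qm 0 w1 w2 w3) by rewrite EA.
  exact: (KeyW sA sB sC sD wp cA cB (CA_C hp cA cB cD) cD).
-
  move=> [ha hd hx hz].
  have a00 := tr0 tA ha; have d00 := tr0 tD hd.
  rewrite -tCD EC ED in hx; move/trE: hx => hx.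
  rewrite EC EA in hz; move/trE: hz => hz.
  have [w1 [w2 [w3 [wp cX cY cZ]]]] := @Zlem a1 a2 a3 d1 d2 d3 c0 c1 c2 c3
     ltac:(rewrite a00 in hz; lra) ltac:(rewrite d00 in hx; lra).
  have cA : CA rA (Qm 0 w1 w2 w3) by rewrite EA a00.
  have cD : CA rD (Qm 0 w1 w2 w3) by rewrite ED d00.
  have cC : CA rC (Qm 0 w1 w2 w3) by rewrite EC.
  exact: (KeyW sA sB sC sD wp cA (CA_B hp cA cC cD) cC cD).
-
  move=> [hb hc hx hz].
  have b00 := tr0 tB hb; have c00 := tr0 tC hc.
  rewrite EA EB in hx; move/trE: hx => hx.
  rewrite EC EA in hz; move/trE: hz => hz.
  have [w1 [w2 [w3 [wp cX cY cZ]]]] := @Zlem b1 b2 b3 c1 c2 c3 a0 a1 a2 a3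
     ltac:(rewrite b00 in hx; lra) ltac:(rewrite c00 in hz; lra).
  have cB : CA rB (Qm 0 w1 w2 w3) by rewrite EB b00.
  have cC : CA rC (Qm 0 w1 w2 w3) by rewrite EC c00.
  have cA : CA rA (Qm 0 w1 w2 w3) by rewrite EA.
  exact: (KeyW sA sB sC sD wp cA cB cC (CA_D hp cA cB cC)).
Qed.

End S.

Unset Implicit Arguments.

Theorem proposition3p2 (R : realType) (a b c d : R)
  (ha : -2 <= a <= 2) (hb : -2 <= b <= 2) (hc : -2 <= c <= 2) (hd : -2 <= d <= 2)
  (rA rB rC rD : 'M[complex R]_2)
  (hrho : hom4 rA rB rC rD)
  (trA : \tr rA = a%:C) (trB : \tr rB = b%:C)
  (trC : \tr rC = c%:C) (trD : \tr rD = d%:C) :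
  let x := \tr (rA *m rB) in
  let y := \tr (rB *m rC) in
  let z := \tr (rC *m rA) in
  let cond1 := [/\ a = 0, b = 0, c = 0 & d = 0] in
  let cond2 :=
       [/\ a = 0, b = 0, y = 0 & z = 0]
    \/ [/\ c = 0, d = 0, y = 0 & z = 0]
    \/ [/\ a = 0, c = 0, x = 0 & y = 0]
    \/ [/\ b = 0, d = 0, x = 0 & y = 0]
    \/ [/\ a = 0, d = 0, x = 0 & z = 0]
    \/ [/\ b = 0, c = 0, x = 0 & z = 0] in
  (G_rep (@Pin2 R) rA rB rC rD /\ ~ G_rep (@Spin2 R) rA rB rC rD ->
     cond1 \/ cond2)
  /\ (cond1 \/ cond2 -> G_rep (@Pin2 R) rA rB rC rD).
Proof.
cbv zeta; split.
- by move=> [hP hS]; exact: (forward hrho trA trB trC trD hP hS).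
- exact: (converse hrho trA trB trC trD).
Qed.
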